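(* Let $f,g\in C[0,1]$. Let $R(f,g)=P(f,g)/Q(f,g)$, where $P(f,g)(x)=p(f(x),g(x))$ and $Q(f,g)(x)=q(f(x),g(x))$ for real polynomials $p,q$ in two variables, and where $Q(f,g)(x)\neq0$ for all $x\in[0,1]$. Then $$\overline{\dim}_B G(R(f,g))\le \max\{\overline{\dim}_B G(f),\ \overline{\dim}_B G(g)\}.$$
   Context: $C[0,1]$ is the space of real-valued continuous functions on $[0,1]$; $G(h)=\{(x,h(x)):x\in[0,1]\}\subset\mathbb{R}^2$ is the graph of $h$. For a nonempty bounded set $F$, $N_\delta(F)$ is the smallest number of sets of diameter at most $\delta$ covering $F$, and $\overline{\dim}_B F=\limsup_{\delta\to0}\frac{\log N_\delta(F)}{-\log\delta}$. *)

(* Defs.v *)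
From HB Require Import structures.
From mathcomp Require Import all_boot all_order all_algebra.
From mathcomp Require Import all_classical all_reals all_analysis.
Set Implicit Arguments. Unset Strict Implicit. Unset Printing Implicit Defensive.
Import Order.TTheory GRing.Theory Num.Theory.
Import numFieldNormedType.Exports.
Local Open Scope classical_set_scope.
Local Open Scope ring_scope.

(* Evaluation of a real bivariate polynomial p(x,y), represented as
   p = sum_i p_i(x) y^i with p : {poly {poly R}}. *)
Definition peval2 {R : realType} (p : {poly {poly R}}) (x y : R) : R :=
  (p.[y%:P]).[x].

Definition dist2 {R : realType} (u v : R * R) : R :=
  Num.sqrt ((u.1 - v.1) ^+ 2 + (u.2 - v.2) ^+ 2).

Definition diam_le {R : realType} (S : set (R * R)) (d : R) : Prop :=
  forall u v, S u -> S v -> dist2 u v <= d.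

Definition graph {R : realType} (h : R -> R) : set (R * R) :=
  [set uv | exists2 x, x \in `[0, 1] & uv = (x, h x)].

(* Defined as the infimum (in \bar R) of the admissible cardinalities, taken
   as a real number (it is attained and finite for bounded nonempty F). *)
Definition covering_number {R : realType} (F : set (R * R)) (d : R) : R :=
  fine (ereal_inf [set (n%:R)%:E | n in
     [set n : nat | exists A : nat -> set (R * R),
        (forall i, (i < n)%N -> diam_le (A i) d) /\
        F `<=` \bigcup_(i in [set i : nat | (i < n)%N]) A i]]).

(* Upper box dimension: limsup_{delta -> 0+} log N_delta(F) / (-log delta),
   written as inf_{eps > 0} sup_{0 < delta < eps}. *)
Definition upper_box_dim {R : realType} (F : set (R * R)) : \bar R :=
  ereal_inf [set ereal_sup [set (ln (covering_number F d) / (- ln d))%:E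
                           | d in [set d : R | 0 < d < e]]
            | e in [set e : R | 0 < e]].

(* Main.v *)
Require Import Defs.
From HB Require Import structures.
From mathcomp Require Import all_boot all_order all_algebra.
From mathcomp Require Import all_classical all_reals all_analysis.
From mathcomp Require Import ring lra zify.
Set Implicit Arguments. Unset Strict Implicit. Unset Printing Implicit Defensive.
Import Order.TTheory GRing.Theory Num.Theory.
Import numFieldNormedType.Exports.
Local Open Scope classical_set_scope.
Local Open Scope ring_scope.
Section S. Variable R : realType.
Lemma itv_cover (lo hi d : R) (n : nat) (P : nat -> bool) (c : nat -> R) :
  0 <= d -> lo <= hi ->
  (forall z, lo <= z <= hi -> exists2 i, (i < n)%N & P i /\ `|z - c i| <= d) ->
  hi - lo <= (\sum_(i < n) (P i)%:R) * (2 * d).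
Proof.
move=> d0 lohi cov.
pose F k : set R := if P k then `[c k - d, c k + d]%classic else set0.
have := @content_subadditive _ _ _ (@lebesgue_measure R) `[lo, hi]%classic F n.
have mF k : measurable (F k) by rewrite /F; case: (P k) => //; exact: measurable_itv.
move=> /(_ (fun k _ => mF k) (measurable_itv _)).
have mFk k : lebesgue_measure (F k) = ((P k)%:R * (2 * d))%:E.
  rewrite /F; case: (P k); last by rewrite measure0 mul0r.
  rewrite lebesgue_measure_itv /= lte_fin.
  case: ltP => h; first by rewrite mul1r -EFinD; congr (_%:E); lra.
  have -> : d = 0 by lra.
  by rewrite mulr0 mulr0.
move=> HH.
have HH' : `[lo, hi]%classic `<=` \big[setU/set0]_(k < n) F k ->
  (lebesgue_measure `[lo, hi]%classic <= (\sum_(k < n) ((P k)%:R * (2 * d))%:E)%R)%E.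
  move=> /HH; rewrite (eq_bigr _ (fun (k : 'I_n) _ => mFk k)) //.
move: HH'.
rewrite sumEFin lebesgue_measure_itv /= lte_fin.
rewrite -big_distrl /=.
case: ltP => h; last first.
  move=> _; have -> : hi - lo = 0 by lra.
  by apply: mulr_ge0 => //; [apply: sumr_ge0 => i _; exact: ler0n | lra].
rewrite -EFinD lee_fin; apply.
move=> z /=; rewrite in_itv /= => /cov [i lti [Pi hz]].
rewrite -bigcup_mkord; exists i => //.
rewrite /F Pi /= in_itv /=.
move: hz; rewrite ler_norml => /andP [h1 h2]; apply/andP; split; lra.
Qed.
End S.
Section S. Variable R : realType.
Definition coverable (F : set (R * R)) (d : R) (n : nat) :=
  exists A : nat -> set (R * R),
        (forall i, (i < n)%N -> diam_le (A i) d) /\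
        F `<=` \bigcup_(i in [set i : nat | (i < n)%N]) A i.

Lemma cov_sub F G d n : F `<=` G -> coverable G d n -> coverable F d n.
Proof. by move=> FG [A [h1 h2]]; exists A; split => // x /FG /h2. Qed.

Lemma cov_le F d n m : (n <= m)%N -> coverable F d n -> coverable F d m.
Proof.
move=> nm [A [h1 h2]]; exists (fun i => if (i < n)%N then A i else set0); split.
  move=> i im; case: ifP => [/h1 //|_ ] u v //.
move=> x /h2 [i /= lin Ai]; exists i => /=; first exact: leq_trans lin nm.
by rewrite lin.
Qed.

Lemma cov_union F G d n m : coverable F d n -> coverable G d m ->
  coverable (F `|` G) d (n + m).
Proof.
move=> [A [h1 h2]] [B [k1 k2]].
exists (fun i => if (i < n)%N then A i else B (i - n)%N); split.
  move=> i lt; case: ifP => [/h1 //| /negbT]; rewrite -leqNgt => ni.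
  apply: k1; lia.
move=> x [/h2 [i /= lin Ai]|/k2 [i /= lim Bi]].
  by exists i => /=; [lia | rewrite lin].
exists (n + i)%N => /=; first lia.
by rewrite ltnNge leq_addr /= addKn.
Qed.

Lemma cov_number F d : (exists n, coverable F d n) ->
  exists n0, [/\ coverable F d n0, covering_number F d = n0%:R &
     forall n, coverable F d n -> (n0 <= n)%N].
Proof.
move=> ex.
have ex' : exists n, (fun n => `[< coverable F d n >]) n.
  by case: ex => n h; exists n; apply/asboolP.
pose n0 := ex_minn ex'.
have [h1 h2] : coverable F d n0 /\ forall n, coverable F d n -> (n0 <= n)%N.
  rewrite /n0; case: ex_minnP => m /asboolP hm hmin; split => // n hn.
  by apply: hmin; apply/asboolP.
exists n0; split => //.
rewrite /covering_number.
have -> : ereal_inf [set (n%:R : R)%:E | n in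
     [set n : nat | exists A : nat -> set (R * R),
        (forall i, (i < n)%N -> diam_le (A i) d) /\
        F `<=` \bigcup_(i in [set i : nat | (i < n)%N]) A i]] = (n0%:R : R)%:E.
  apply: le_anti; apply/andP; split.
    by apply: ereal_inf_lbound; exists n0.
  apply: le_ereal_inf_tmp => _ [n hn <-]; rewrite lee_fin ler_nat; exact: h2.
by [].
Qed.
Lemma dist_ge1 (u v : R * R) : `|u.1 - v.1| <= dist2 u v.
Proof.
rewrite /dist2 -sqrtr_sqr ler_sqrt; last by apply: addr_ge0; apply: sqr_ge0.
by rewrite lerDl sqr_ge0.
Qed.
Lemma dist_ge2 (u v : R * R) : `|u.2 - v.2| <= dist2 u v.
Proof.
rewrite /dist2 -sqrtr_sqr ler_sqrt; last by apply: addr_ge0; apply: sqr_ge0.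
by rewrite lerDr sqr_ge0.
Qed.
Lemma dist_le (u v : R * R) w d : `|u.1 - v.1| <= w -> `|u.2 - v.2| <= w ->
  2 * w <= d -> dist2 u v <= d.
Proof.
move=> h1 h2 wd.
have w0 : 0 <= w by apply: le_trans h1.
have d0 : 0 <= d by lra.
rewrite /dist2 -(ger0_norm d0) -sqrtr_sqr ler_sqrt; last exact: sqr_ge0.
move: h1 h2; rewrite !ler_norml => /andP [a1 a2] /andP [b1 b2].
set x := u.1 - v.1 in a1 a2 *; set y := u.2 - v.2 in b1 b2 *.
nra.
Qed.

Lemma cov_box (a c l w d : R) : 0 < w -> 0 <= l -> 2 * w <= d ->
  coverable [set u | a <= u.1 <= a + w /\ c <= u.2 <= c + l] d (Num.truncn (l / w)).+1.
Proof.
move=> w0 l0 wd.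
exists (fun j => [set u | a <= u.1 <= a + w /\ c + j%:R * w <= u.2 <= c + j.+1%:R * w]).
split.
  move=> j _ u v /= [/andP [u1 u2] /andP [u3 u4]] [/andP [v1 v2] /andP [v3 v4]].
  rewrite mulrS mulrDl mul1r in u4 v4.
  apply: (dist_le (w := w)) => //; rewrite ler_norml; apply/andP; split; lra.
move=> u /= [ha /andP [hc1 hc2]].
have y0 : 0 <= (u.2 - c) / w by apply: divr_ge0 => //; lra.
exists (Num.truncn ((u.2 - c) / w)) => /=.
  rewrite ltnS; apply: le_truncn; rewrite ler_pM2r ?invr_gt0 //; lra.
split => //.
have /andP [t1 t2] := Num.Theory.truncn_itv y0.
rewrite ler_pdivlMr // in t1; rewrite ltr_pdivrMr // in t2.
apply/andP; split; lra.
Qed.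
Definition piece (w : R) (c r : nat -> R) k : set (R * R) :=
  [set u | k%:R * w <= u.1 <= k%:R * w + w /\ c k - r k <= u.2 <= c k - r k + 2 * r k].

Lemma cov_pieces (w d : R) (c r : nat -> R) M : 0 < w -> 2 * w <= d ->
  (forall k, 0 <= r k) ->
  coverable [set u | exists2 k, (k < M)%N & piece w c r k u] d
    (\sum_(k < M) (Num.truncn (2 * r k / w)).+1)%N.
Proof.
move=> w0 wd r0; elim: M => [|M IH].
  by rewrite big_ord0; exists (fun=> set0); split => // u [k].
rewrite big_ord_recr /=.
apply: cov_sub (cov_union IH (cov_box (M%:R * w) (c M - r M) w0 _ wd)).
  move=> u [k]; rewrite ltnS leq_eqVlt => /orP [/eqP ->|km] pk; last by left; exists k.
  by right.
by apply: mulr_ge0 => //.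
Qed.

Lemma cov_cols (phi : R -> R) (w d : R) (M : nat) (c r : nat -> R) :
  0 < w -> 2 * w <= d -> (forall k, 0 <= r k) ->
  (forall x, x \in `[0, 1] -> exists2 k, (k < M)%N & k%:R * w <= x <= k.+1%:R * w) ->
  (forall k x, (k < M)%N -> x \in `[0, 1] -> k%:R * w <= x <= k.+1%:R * w ->
      `|phi x - c k| <= r k) ->
  coverable (graph phi) d (\sum_(k < M) (Num.truncn (2 * r k / w)).+1)%N.
Proof.
move=> w0 wd r0 hcol hb.
apply: cov_sub (cov_pieces c M w0 wd r0).
move=> _ [x x01 ->]; have [k kM hk] := hcol x x01; exists k => //.
have := hb k x kM x01 hk; rewrite ler_norml => /andP [h1 h2].
move: hk; rewrite mulrS mulrDl mul1r => hk.
by split => //=; apply/andP; split; lra.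
Qed.
Definition meets (f : R -> R) (A : set (R * R)) (s t : R) : bool :=
  `[< exists t0, s <= t0 <= t /\ A (t0, f t0) >].

Lemma osc_bound (f : R -> R) d n (A : nat -> set (R * R)) s t :
  {within `[0, 1]%classic, continuous f} -> 0 <= d ->
  (forall i, (i < n)%N -> diam_le (A i) d) ->
  graph f `<=` \bigcup_(i in [set i : nat | (i < n)%N]) A i ->
  0 <= s -> t <= 1 -> forall x y, s <= x <= t -> s <= y <= t ->
  `|f x - f y| <= (\sum_(i < n) (meets f (A i) s t)%:R) * (2 * d).
Proof.
move=> fc d0 hd hcov s0 t1.
suff H : forall x y, s <= x <= t -> s <= y <= t -> x <= y ->
  `|f x - f y| <= (\sum_(i < n) (meets f (A i) s t)%:R) * (2 * d).
  move=> x y hx hy; case: (leP x y) => xy; first exact: H.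
  by rewrite distrC; apply: H => //; apply: ltW.
move=> x y /andP [x1 x2] /andP [y1 y2] xy.
have fcxy : {within `[x, y]%classic, continuous f}.
  apply: continuous_subspaceW fc => z /=; rewrite !in_itv /= => /andP [z1 z2].
  by apply/andP; split; lra.
pose c i := (xget (0, 0) (A i)).2.
have key : forall z, Num.min (f x) (f y) <= z <= Num.max (f x) (f y) ->
    exists2 i, (i < n)%N & meets f (A i) s t /\ `|z - c i| <= d.
  move=> z /(IVT xy fcxy) [t0 t0xy ft0].
  move: t0xy; rewrite in_itv /= => /andP [t01 t02].
  have : graph f (t0, f t0).
    by exists t0 => //; rewrite in_itv /=; apply/andP; split; lra.
  move=> /hcov [i /= ltin Ai]; exists i => //; split.
    by apply/asboolP; exists t0; split => //; apply/andP; split; lra.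
  have Ax : A i (xget (0, 0) (A i)) by apply: xgetI Ai.
  apply: le_trans (hd i ltin _ _ Ai Ax); rewrite -ft0.
  exact: (dist_ge2 (t0, f t0)).
have mm : Num.min (f x) (f y) <= Num.max (f x) (f y).
  by case: (leP (f x) (f y)) => h //; apply: ltW.
apply: le_trans (itv_cover d0 mm key).
by case: (leP (f x) (f y)) => h; rewrite ler_norml; apply/andP; split; lra.
Qed.
End S.
Section S6. Variable R : realType.
Lemma sum_window a b M : (\sum_(k < M) ((a <= k) && (k < b)) : nat)%N = (minn M b - a)%N.
Proof.
elim: M => [|M IH]; first by rewrite big_ord0 min0n.
rewrite big_ord_recr /= IH.
case: (leqP a M) => h1; case: (ltnP M b) => h2 /=; lia.
Qed.

Lemma sum_close (Q : nat -> bool) M :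
  (forall k k', Q k -> Q k' -> (k' <= k + 3)%N) ->
  (\sum_(k < M) (Q k : nat) <= 7)%N.
Proof.
move=> hQ.
case: (boolP [exists k : 'I_M, Q k]) => [/existsP [k0 Qk0]|/existsPn hn]; last first.
  by rewrite big1 // => k _; rewrite (negbTE (hn k)).
apply: leq_trans (_ : (\sum_(k < M) (((k0 - 3) <= k) && (k < k0 + 4)) : nat) <= 7)%N.
  apply: leq_sum => k _; case: (boolP (Q k)) => // Qk.
  have := hQ _ _ Qk0 Qk; have := hQ _ _ Qk Qk0.
  move=> h1 h2; rewrite (_ : ((k0 - 3 <= k) && (k < k0 + 4))%N = true) //.
  apply/andP; split; lia.
rewrite sum_window; lia.
Qed.
End S6.
Section S7. Variable R : realType.
Lemma peval2_step (p : {poly {poly R}}) (c : {poly R}) x y :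
  peval2 (p * 'X + c%:P) x y = peval2 p x y * y + c.[x].
Proof. by rewrite /peval2 hornerMXaddC hornerD hornerM hornerC. Qed.

Lemma peval20 x y : peval2 (0 : {poly {poly R}}) x y = 0.
Proof. by rewrite /peval2 horner0 horner0. Qed.

Lemma norm_mul_le (a b A B : R) : `|a| <= A -> `|b| <= B -> `|a * b| <= A * B.
Proof. by move=> h1 h2; rewrite normrM; apply: ler_pM => //; apply: normr_ge0. Qed.

Lemma poly_lip (r : {poly R}) (B : R) : 0 <= B -> exists K M : R,
  [/\ 0 <= K, 0 <= M & forall u u', `|u| <= B -> `|u'| <= B ->
     `|r.[u]| <= M /\ `|r.[u] - r.[u']| <= K * `|u - u'|].
Proof.
move=> B0; elim/poly_ind: r => [|r c [K [M [K0 M0 H]]]].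
  by exists 0, 0; split => // u u' _ _; rewrite !horner0 subr0 normr0 mul0r.
exists (K * B + M), (M * B + `|c|); split.
- by apply: addr_ge0 => //; apply: mulr_ge0.
- by apply: addr_ge0 => //; apply: mulr_ge0.
move=> u u' hu hu'; have [h1 h2] := H u u' hu hu'; have [h1' _] := H u' u hu' hu.
rewrite !hornerMXaddC; split.
  apply: le_trans (ler_normD _ _) _; rewrite lerD2r; exact: norm_mul_le.
have -> : r.[u] * u + c - (r.[u'] * u' + c) = (r.[u] - r.[u']) * u + r.[u'] * (u - u').
  by ring.
apply: le_trans (ler_normD _ _) _.
have a1 := norm_mul_le h2 hu; have a2 := norm_mul_le h1' (lexx `|u - u'|).
have := normr_ge0 (u - u'); move: a1 a2.
set X := `|u - u'|; set P := `|_ * u|; set Q := `|_ * (u - u')|; nra.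
Qed.

Lemma peval2_lip (p : {poly {poly R}}) (B : R) : 0 <= B -> exists K M : R,
  [/\ 0 <= K, 0 <= M & forall x y x' y', `|x| <= B -> `|y| <= B ->
     `|x'| <= B -> `|y'| <= B ->
     `|peval2 p x y| <= M /\
     `|peval2 p x y - peval2 p x' y'| <= K * (`|x - x'| + `|y - y'|)].
Proof.
move=> B0; elim/poly_ind: p => [|p c [K [M [K0 M0 H]]]].
  by exists 0, 0; split => // *; rewrite !peval20 subr0 normr0 mul0r.
have [Kc [Mc [Kc0 Mc0 Hc]]] := poly_lip c B0.
exists (K * B + M + Kc), (M * B + Mc); split.
- by apply: addr_ge0 => //; apply: addr_ge0 => //; apply: mulr_ge0.
- by apply: addr_ge0 => //; apply: mulr_ge0.
move=> x y x' y' hx hy hx' hy'.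
have [h1 h2] := H x y x' y' hx hy hx' hy'.
have [h1' _] := H x' y' x y hx' hy' hx hy.
have [c1 c2] := Hc x x' hx hx'.
rewrite !peval2_step; split.
  apply: le_trans (ler_normD _ _) _; apply: lerD => //; exact: norm_mul_le.
set a := peval2 p x y; set a' := peval2 p x' y'.
have -> : a * y + c.[x] - (a' * y' + c.[x']) =
   (a - a') * y + a' * (y - y') + (c.[x] - c.[x']) by ring.
apply: le_trans (ler_normD _ _) _.
have a1 := norm_mul_le h2 hy; have a2 := norm_mul_le h1' (lexx `|y - y'|).
have := ler_normD ((a - a') * y) (a' * (y - y')).
have := normr_ge0 (y - y'); have := normr_ge0 (x - x').
move: a1 a2 c2.
set X := `|x - x'|; set Y := `|y - y'|; set P := `|_ * y|; set Q := `|_ * (y - y')|.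
set S := `|_ + _|; set T := `|c.[x] - c.[x']|.
nra.
Qed.
Lemma ratio_lip (p1 p2 q1 q2 m Mp Mq Dp Dq : R) : 0 < m -> m <= `|q1| -> m <= `|q2| ->
  `|p2| <= Mp -> `|q2| <= Mq -> `|p1 - p2| <= Dp -> `|q1 - q2| <= Dq ->
  `|p1 / q1 - p2 / q2| <= (Dp * Mq + Mp * Dq) / (m * m).
Proof.
move=> m0 hq1 hq2 hp2 hMq hDp hDq.
have q10 : q1 != 0 by rewrite -normr_gt0; lra.
have q20 : q2 != 0 by rewrite -normr_gt0; lra.
have -> : p1 / q1 - p2 / q2 = ((p1 - p2) * q2 + p2 * (q2 - q1)) / (q1 * q2).
  by field; apply/andP; split.
rewrite normrM normfV normrM.
have mm0 : 0 < m * m by apply: mulr_gt0.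
have qq : m * m <= `|q1| * `|q2| by apply: ler_pM => //; lra.
have qq0 : 0 < `|q1| * `|q2| by lra.
have hn : `|(p1 - p2) * q2 + p2 * (q2 - q1)| <= Dp * Mq + Mp * Dq.
  apply: le_trans (ler_normD _ _) _; apply: lerD; first exact: norm_mul_le.
  by apply: norm_mul_le; rewrite // distrC.
have D0 : 0 <= Dp * Mq + Mp * Dq by apply: le_trans hn; apply: normr_ge0.
rewrite ler_pdivrMr //.
have h1 : 1 <= `|q1| * `|q2| / (m * m) by rewrite ler_pdivlMr // mul1r.
apply: le_trans hn _.
rewrite mulrAC -mulrA; apply: ler_peMr => //.
Qed.

Lemma peval2_cont (p : {poly {poly R}}) (A : set R) (f g : R -> R) :
  {within A, continuous f} -> {within A, continuous g} ->
  {within A, continuous (fun x => peval2 p (f x) (g x))}.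
Proof.
move=> cf cg; elim/poly_ind: p => [|p c IH].
  under eq_fun do rewrite peval20; exact: cst_continuous.
under eq_fun do rewrite peval2_step.
move=> x; apply: cvgD; first by apply: cvgM; [exact: IH | exact: cg].
exact: (continuous_comp (cf x) (@continuous_horner R c (f x))).
Qed.
End S7.
Section S9. Variable R : realType.
Lemma cols (w : R) : 0 < w ->
  [/\ forall x, x \in `[0, 1] -> exists2 k, (k < (Num.truncn (1 / w)).+1)%N &
         k%:R * w <= x <= k.+1%:R * w,
      forall k, (k < (Num.truncn (1 / w)).+1)%N -> k%:R * w <= 1 &
      ((Num.truncn (1 / w)).+1)%:R <= 1 / w + 1].
Proof.
move=> w0; have iw0 : 0 <= 1 / w by apply: divr_ge0 => //; exact: ltW.
split.
- move=> x; rewrite in_itv /= => /andP [x0 x1].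
  have xw0 : 0 <= x / w by apply: divr_ge0 => //; exact: ltW.
  exists (Num.truncn (x / w)).
    rewrite ltnS; apply: le_truncn; apply: ler_pM => //.
    by rewrite invr_ge0; apply: ltW.
  have /andP [t1 t2] := Num.Theory.truncn_itv xw0.
  rewrite ler_pdivlMr // in t1; rewrite ltr_pdivrMr // in t2.
  by apply/andP; split => //; apply: ltW.
- move=> k; rewrite ltnS => hk.
  have := Num.Theory.truncn_le (1 / w); rewrite iw0 => h.
  have : k%:R <= 1 / w by apply: le_trans h; rewrite ler_nat.
  by rewrite ler_pdivlMr.
- rewrite -addn1 natrD lerD2r.
  by have := Num.Theory.truncn_le (1 / w); rewrite iw0.
Qed.
End S9.
Lemma h_lip (R : realType) (f g : R -> R) (p q : {poly {poly R}}) :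
  {within `[0, 1]%classic, continuous f} ->
  {within `[0, 1]%classic, continuous g} ->
  (forall x : R, x \in `[0, 1] -> peval2 q (f x) (g x) != 0) ->
  exists L : R, 0 <= L /\ forall x y, x \in `[0, 1] -> y \in `[0, 1] ->
   `|peval2 p (f x) (g x) / peval2 q (f x) (g x) - peval2 p (f y) (g y) / peval2 q (f y) (g y)|
    <= L * (`|f x - f y| + `|g x - g y|).
Proof.
move=> cf cg qn0.
have l01 : (0 : R) <= 1 by [].
have [a1 _ ha1] := EVT_max l01 cf.
have [a2 _ ha2] := EVT_min l01 cf.
have [b1 _ hb1] := EVT_max l01 cg.
have [b2 _ hb2] := EVT_min l01 cg.
pose B := `|f a1| + `|f a2| + `|g b1| + `|g b2|.
have hB : forall x, x \in `[0, 1] -> `|f x| <= B /\ `|g x| <= B.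
  move=> x x01; have := ha1 x x01; have := ha2 x x01; have := hb1 x x01; have := hb2 x x01.
  have nb (t : R) : - `|t| <= t <= `|t| by rewrite -ler_norml.
  have := nb (f a1); have := nb (f a2); have := nb (g b1); have := nb (g b2).
  have := normr_ge0 (g b1); have := normr_ge0 (g b2); have := normr_ge0 (f a1); have := normr_ge0 (f a2).
  rewrite /B => *; split; rewrite ler_norml; apply/andP; split; lra.
have B0 : 0 <= B by rewrite /B; repeat apply: addr_ge0; apply: normr_ge0.
have cQ : {within `[0, 1]%classic, continuous (fun x => `|peval2 q (f x) (g x)|)}.
  move=> x; apply: cvg_norm; exact: peval2_cont.
have [c0 c01 hc0] := EVT_min l01 cQ.
set m := `|peval2 q (f c0) (g c0)| in hc0.
have m0 : 0 < m by rewrite /m normr_gt0; apply: qn0.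
have [Kp [Mp [Kp0 Mp0 Hp]]] := peval2_lip p B0.
have [Kq [Mq [Kq0 Mq0 Hq]]] := peval2_lip q B0.
exists ((Kp * Mq + Mp * Kq) / (m * m)); split.
  by apply: divr_ge0; [apply: addr_ge0; apply: mulr_ge0 | apply: mulr_ge0; apply: ltW].
move=> x y x01 y01.
have [fx gx] := hB x x01; have [fy gy] := hB y y01.
have [_ hp] := Hp _ _ _ _ fx gx fy gy; have [hp2 _] := Hp _ _ _ _ fy gy fx gx.
have [_ hq] := Hq _ _ _ _ fx gx fy gy; have [hq2 _] := Hq _ _ _ _ fy gy fx gx.
have := ratio_lip m0 (hc0 x x01) (hc0 y y01) hp2 hq2 hp hq.
set D := `|f x - f y| + `|g x - g y|.
have -> : (Kp * Mq + Mp * Kq) / (m * m) * D = (Kp * D * Mq + Mp * (Kq * D)) / (m * m) by ring.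
by [].
Qed.
Lemma cover_lb (R : realType) (phi : R -> R) (d : R) n :
  0 <= d -> coverable (graph phi) d n -> 1 <= n%:R * (2 * d).
Proof.
move=> d0 [A [hd hc]].
have key : forall z : R, 0 <= z <= 1 -> exists2 i, (i < n)%N &
    (fun=> true) i /\ `|z - (xget (0, 0) (A i)).1| <= d.
  move=> z z01.
  have : graph phi (z, phi z) by exists z => //; rewrite in_itv.
  move=> /hc [i /= lin Ai]; exists i => //; split => //.
  have Ax : A i (xget (0, 0) (A i)) by apply: xgetI Ai.
  apply: le_trans (hd i lin _ _ Ai Ax); exact: (dist_ge1 (z, phi z)).
have := itv_cover d0 ler01 key.
by rewrite subr0 sumr_const card_ord mulr1n.
Qed.

Lemma cover_ex (R : realType) (phi : R -> R) (d : R) :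
  {within `[0, 1]%classic, continuous phi} -> 0 < d ->
  exists n, coverable (graph phi) d n.
Proof.
move=> cphi d0.
have l01 : (0 : R) <= 1 by [].
have [a1 _ ha1] := EVT_max l01 cphi.
have [a2 _ ha2] := EVT_min l01 cphi.
pose B := `|phi a1| + `|phi a2|.
have w0 : 0 < d / 2 by apply: divr_gt0.
have [hcol _ _] := cols w0.
eexists; apply: (@cov_cols R phi (d / 2) d _ (fun=> 0) (fun=> B) w0).
- by rewrite mulrC divfK.
- by move=> _; rewrite /B; apply: addr_ge0; apply: normr_ge0.
- exact: hcol.
move=> k x _ x01 _; rewrite subr0 /B.
have nb (t : R) : - `|t| <= t <= `|t| by rewrite -ler_norml.
have := ha1 x x01; have := ha2 x x01.
have := nb (phi a1); have := nb (phi a2).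
rewrite ler_norml => *; apply/andP; split; lra.
Qed.
Lemma col_count (R : realType) (f : R -> R) (w : R) n (A : nat -> set (R * R)) M :
  0 < w -> (forall i, (i < n)%N -> diam_le (A i) (2 * w)) ->
  \sum_(k < M) \sum_(i < n) (meets f (A i) (k%:R * w) (Num.min (k.+1%:R * w) 1))%:R
    <= 7 * (n%:R : R).
Proof.
move=> w0 hd.
rewrite exchange_big /=.
have -> : 7 * n%:R = \sum_(i < n) (7 : R) by rewrite sumr_const card_ord mulr_natr.
apply: ler_sum => i _.
rewrite -natr_sum ler_nat.
apply: (@sum_close (fun k => meets f (A i) (k%:R * w) (Num.min (k.+1%:R * w) 1))) => k k' /asboolP [t0 [/andP [t1 t2] At0]] /asboolP [t0' [/andP [t1' t2'] At0']].
have hi : (i < n)%N by [].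
have := hd i hi _ _ At0 At0' => hdist.
have := le_trans (dist_ge1 (t0, f t0) (t0', f t0')) hdist => /=.
rewrite ler_norml => /andP [e1 e2].
have t2m : t0 <= k.+1%:R * w by apply: le_trans t2 _; rewrite ge_min lexx.
have : k'%:R * w <= (k + 3)%:R * w.
  move: t2m; rewrite natrD mulrS !mulrDl mul1r; lra.
by rewrite ler_pM2r // ler_nat.
Qed.

Lemma compare (R : realType) (f g : R -> R) (p q : {poly {poly R}}) :
  {within `[0, 1]%classic, continuous f} ->
  {within `[0, 1]%classic, continuous g} ->
  (forall x : R, x \in `[0, 1] -> peval2 q (f x) (g x) != 0) ->
  exists K : R, 0 < K /\ forall d, 0 < d < 1 ->
  [/\ 1 <= covering_number (graph (fun x => peval2 p (f x) (g x) / peval2 q (f x) (g x))) d,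
      1 <= covering_number (graph f) d, 1 <= covering_number (graph g) d &
      covering_number (graph (fun x => peval2 p (f x) (g x) / peval2 q (f x) (g x))) d
      <= K * Num.max (covering_number (graph f) d) (covering_number (graph g) d)].
Proof.
move=> cf cg qn0.
set h := (fun x => peval2 p (f x) (g x) / peval2 q (f x) (g x)).
have [L [L0 hL]] := h_lip p cf cg qn0.
exists (2 * (56 * L + 5)); split; first lra.
move=> d /andP [d0 d1].
have w0 : 0 < d / 2 by apply: divr_gt0.
set w := d / 2 in w0 *.
have e2w : 2 * w = d by rewrite /w mulrC divfK.
have [hcol hcolk hM] := cols w0.
set M := (Num.truncn (1 / w)).+1 in hcol hcolk hM.
have [nf [[Af [hdf hcf]] -> minf]] := cov_number (cover_ex cf d0).
have [ng [[Ag [hdg hcg]] -> ming]] := cov_number (cover_ex cg d0).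
have lbf := cover_lb (ltW d0) (ex_intro _ Af (conj hdf hcf)).
have lbg := cover_lb (ltW d0) (ex_intro _ Ag (conj hdg hcg)).
have nf1 : 1 <= nf%:R :> R.
  rewrite ler1n lt0n; apply/negP => /eqP nf0; move: lbf; rewrite nf0 mul0r; lra.
have ng1 : 1 <= ng%:R :> R.
  rewrite ler1n lt0n; apply/negP => /eqP ng0; move: lbg; rewrite ng0 mul0r; lra.
pose tk k := Num.min (k.+1%:R * w) 1.
pose a k : R := \sum_(i < nf) (meets f (Af i) (k%:R * w) (tk k))%:R.
pose b k : R := \sum_(i < ng) (meets g (Ag i) (k%:R * w) (tk k))%:R.
pose r k : R := L * ((a k + b k) * (2 * d)).
have a0 k : 0 <= a k by apply: sumr_ge0 => i _; apply: ler0n.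
have b0 k : 0 <= b k by apply: sumr_ge0 => i _; apply: ler0n.
have r0 k : 0 <= r k.
  by apply: mulr_ge0 => //; apply: mulr_ge0; [apply: addr_ge0 | lra].
have covh : coverable (graph h) d (\sum_(k < M) (Num.truncn (2 * r k / w)).+1)%N.
  apply: (@cov_cols R h w d M (fun k => h (k%:R * w)) r w0) => //; first lra.
  move=> k x kM x01 /andP [xk1 xk2].
  have kw0 : 0 <= k%:R * w by apply: mulr_ge0 => //; apply: ltW.
  have kw1 := hcolk k kM.
  have kw01 : k%:R * w \in `[0, 1] by rewrite in_itv /=; apply/andP.
  apply: le_trans (hL x _ x01 kw01) _; rewrite /r.
  apply: ler_wpM2l => //; rewrite mulrDl.
  have x1 : x <= 1 by move: x01; rewrite in_itv /= => /andP [].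
  have hx : k%:R * w <= x <= tk k by rewrite /tk le_min xk2 x1 xk1.
  have hk : k%:R * w <= k%:R * w <= tk k.
    by rewrite lexx /tk le_min kw1 andbT ler_pM2r // ler_nat /= leqnSn.
  have t1 : tk k <= 1 by rewrite /tk ge_min lexx orbT.
  apply: lerD.
    by apply: (osc_bound cf (ltW d0) hdf hcf kw0 t1 hx hk).
  by apply: (osc_bound cg (ltW d0) hdg hcg kw0 t1 hx hk).
have [nh [covh' -> minh]] := cov_number (ex_intro _ _ covh).
have nhT := minh _ covh.
have Tb : ((\sum_(k < M) (Num.truncn (2 * r k / w)).+1)%N%:R : R) <=
    8 * L * (7 * nf%:R + 7 * ng%:R) + M%:R.
  rewrite natr_sum.
  apply: le_trans (_ : \sum_(k < M) (8 * L * (a k + b k) + 1) <= _).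
    apply: ler_sum => k _; rewrite mulrSr lerD2r.
    have -> : 8 * L * (a k + b k) = 2 * r k / w.
      rewrite /r /w; field; lra.
    rewrite Num.Theory.truncn_le; apply: divr_ge0; first by apply: mulr_ge0.
    exact: ltW.
  rewrite big_split /= sumr_const card_ord -mulr_sumr big_split /= lerD2r.
  apply: ler_wpM2l; first lra.
  apply: lerD; apply: col_count => //; rewrite e2w //.
have Mb : M%:R <= 5 * nf%:R :> R.
  apply: le_trans hM _; rewrite /w.
  have -> : 1 / (d / 2) = 2 / d by field; lra.
  have : 2 / d <= 4 * nf%:R.
    rewrite ler_pdivrMr //; nra.
  lra.
have nhb : nh%:R <= (56 * L + 5) * (nf%:R + ng%:R) :> R.
  apply: le_trans (_ : (\sum_(k < M) (Num.truncn (2 * r k / w)).+1)%N%:R <= _).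
    by rewrite ler_nat.
  apply: le_trans Tb _; nra.
split => //.
  rewrite ler1n lt0n; apply/negP => /eqP nh0; move: covh'; rewrite nh0 => -[A [_ hA]].
  have : graph h (0, h 0) by exists 0 => //; rewrite in_itv /= lexx ler01.
  by move=> /hA [i /=].
apply: le_trans nhb _.
have : nf%:R + ng%:R <= 2 * Num.max (nf%:R : R) ng%:R.
  have := le_max (nf%:R : R) (nf%:R) (ng%:R); have := le_max (ng%:R : R) (nf%:R) (ng%:R).
  rewrite !lexx ?orbT /=; lra.
nra.
Qed.
Lemma ratio_bound (R : realType) (Nh Nf Ng K d r e : R) : 0 < K -> 0 < d < 1 ->
  1 <= Nh -> 1 <= Nf -> 1 <= Ng -> Nh <= K * Num.max Nf Ng ->
  ln Nf / (- ln d) <= r -> ln Ng / (- ln d) <= r -> ln K <= e * (- ln d) ->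
  ln Nh / (- ln d) <= r + e.
Proof.
move=> K0 dd h1 f1 g1 hK hf hg he.
have ld : 0 < - ln d by rewrite oppr_gt0; apply: ln_lt0.
rewrite ler_pdivrMr // in hf; rewrite ler_pdivrMr // in hg.
have key : forall N, 1 <= N -> Nh <= K * N -> ln N <= r * - ln d -> ln Nh <= (r + e) * - ln d.
  move=> N N1 hN hr.
  have : ln Nh <= ln (K * N).
    by rewrite ler_ln // posrE; [lra | apply: mulr_gt0; lra].
  rewrite lnM ?posrE; [|lra|lra].
  move=> hl; rewrite mulrDl; lra.
rewrite ler_pdivrMr //.
case: (leP Nf Ng) => hfg.
  by apply: (key Ng) => //; move: hK; rewrite (max_r hfg).
by apply: (key Nf) => //; move: hK; rewrite (max_l (ltW hfg)).
Qed.

Lemma inf_lt (R : realType) (F : set (R * R)) (r : R) : (upper_box_dim F < r%:E)%E ->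
  exists2 e : R, 0 < e & forall d, 0 < d < e -> ln (covering_number F d) / (- ln d) <= r.
Proof.
rewrite /upper_box_dim => /ereal_inf_lt [_ [e /= e0 <-] hs].
exists e => // d hd.
rewrite -lee_fin; apply: le_trans (ltW hs).
by apply: ereal_sup_ubound; exists d.
Qed.

Theorem proposition3p8 (R : realType) (f g : R -> R)
  (p q : {poly {poly R}}) :
  {within `[0, 1]%classic, continuous f} ->
  {within `[0, 1]%classic, continuous g} ->
  (forall x : R, x \in `[0, 1] -> peval2 q (f x) (g x) != 0) ->
  Order.le (upper_box_dim (graph (fun x => peval2 p (f x) (g x) / peval2 q (f x) (g x))))
   (maxe (upper_box_dim (graph f)) (upper_box_dim (graph g))).
Proof.
move=> cf cg qn0.
have [K [K0 hK]] := compare p cf cg qn0.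
set h := (fun x => peval2 p (f x) (g x) / peval2 q (f x) (g x)) in hK *.
set D := maxe _ _.
have main : forall r e : R, (D < r%:E)%E -> 0 < e -> (upper_box_dim (graph h) <= (r + e)%:E)%E.
  move=> r e; rewrite /D gt_max => /andP [/inf_lt [ef ef0 hf] /inf_lt [eg eg0 hg]] e0.
  pose e1 := expR (- ln K / e).
  pose e2 := Num.min (Num.min ef eg) (Num.min 1 e1).
  have e20 : 0 < e2.
    rewrite /e2 !lt_min ef0 eg0 ltr01 /=; exact: expR_gt0.
  have hs : (upper_box_dim (graph h) <= ereal_sup [set ((ln (covering_number (graph h) d) / (- ln d))%R)%:E
                           | d in [set d : R | (0 < d < e2)%R]])%E.
    by apply: ereal_inf_lbound; exists e2.
  apply: le_trans hs _.
  apply: ge_ereal_sup => _ [d /= /andP [d0 de2] <-]; rewrite lee_fin.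
  move: de2; rewrite /e2 !lt_min => /andP [/andP [def deg] /andP [d1 de1]].
  have dd : 0 < d < 1 by apply/andP.
  have [h1 f1 g1 hb] := hK d dd.
  apply: (ratio_bound K0 dd h1 f1 g1 hb).
  - by apply: hf; apply/andP.
  - by apply: hg; apply/andP.
  have : ln d < - ln K / e.
    by rewrite -(expRK (- ln K / e)) ltr_ln ?posrE ?expR_gt0.
  rewrite ltr_pdivlMr // => hl.
  lra.
apply/lee_addgt0Pr => e e0.
move: (main) => {main}; case: D => [r0| |] main.
- have -> : (r0%:E + e%:E)%E = (r0 + e / 2 + e / 2)%:E by rewrite -EFinD; congr (_%:E); field.
  apply: main; last lra.
  by rewrite lte_fin; lra.
- by rewrite leey.
- have : upper_box_dim (graph h) = -oo%E.
    case E: (upper_box_dim (graph h)) => [x| |] //.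
      have := main (x - 2)%R 1%R (ltNyr (x - 2)%R) (@ltr01 R); rewrite E lee_fin => H; exfalso; lra.
    by have := main 0%R 1%R (ltNyr 0%R) (@ltr01 R); rewrite E.
  by move=> ->.
Qed.
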